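(* Let $U$, $\widetilde U$ be groups, $\widetilde V\le \widetilde U$ a subgroup, and $I$ an index set. Let $\widetilde{\mathcal A}=\{\widetilde G_{ij},\widetilde\phi^i_{ij}\mid i\neq j\in I\}$ be a $\widetilde U$-amalgam over $I$ such that $\widetilde G_{ij}=\langle \widetilde\phi^i_{ij}(\widetilde U),\widetilde\phi^j_{ij}(\widetilde U)\rangle$ for all $i\ne j$, and let $\mathcal A=\{G_{ij},\phi^i_{ij}\mid i\neq j\in I\}$ be a $U$-amalgam over $I$. Let $\alpha=\{\pi,\rho^i,\alpha_{ij}\}:\widetilde{\mathcal A}\to\mathcal A$ be an epimorphism of amalgams, let $(\widetilde G,\{\widetilde\tau_{ij}\})$ and $(G,\{\tau_{ij}\})$ be universal enveloping groups of $\widetilde{\mathcal A}$ and $\mathcal A$, and let $\widehat\alpha:\widetilde G\to G$ be the unique epimorphism with $\widehat\alpha\circ\widetilde\tau_{ij}=\tau_{\pi(i)\pi(j)}\circ\alpha_{ij}$ for all $i\ne j$. For $i\neq j$ put $Z^i_{ij}:=\widetilde\phi^i_{ij}(\widetilde V)$, $Z_{ij}:=\langle Z^i_{ij},Z^j_{ij}\rangle$ and $A_{ij}:=\ker(\alpha_{ij})$. If $A_{ij}\le Z_{ij}\le Z(\widetilde G_{ij})$ for all $i\ne j$, then $N:=\langle \widetilde\tau_{ij}(A_{ij})\mid i\ne j\in I\rangle$ is contained in the centre of $\widetilde G$, $N=\ker\widehat\alpha$, and $\widetilde G/N\cong G$ via $\widehat\alpha$; i.e. $\widetilde G$ is a central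 extension of $G$ by $N$.
   Context: A $U$-amalgam over a set $I$ is a family $\{G_{ij},\phi^i_{ij}\mid i\ne j\in I\}$ of groups $G_{ij}$ (indexed by unordered pairs, $G_{ij}=G_{ji}$) and monomorphisms $\phi^i_{ij}:U\to G_{ij}$. An enveloping group of such an amalgam is a group $G$ with homomorphisms $\tau_{ij}:G_{ij}\to G$ such that $G$ is generated by the $\tau_{ij}(G_{ij})$ and $\tau_{ij}\circ\phi^j_{ij}=\tau_{kj}\circ\phi^j_{kj}$ for all pairwise distinct $i,j,k$; it is universal if for every enveloping group $(H,\{\tau'_{ij}\})$ there is a unique epimorphism $p:G\to H$ with $p\circ\tau_{ij}=\tau'_{ij}$ for all $i\ne j$. If $\widetilde{\mathcal A}$ is a $\widetilde U$-amalgam and $\mathcal A$ a $U$-amalgam over $I$, an epimorphism $\widetilde{\mathcal A}\to\mathcal A$ is a system $\{\pi,\rho^i,\alpha_{ij}\}$ consisting of a permutation $\pi$ of $I$, group epimorphisms $\rho^i:\widetilde U\to U$ and group epimorphisms $\alpha_{ij}:\widetilde G_{ij}\to G_{\pi(i)\pi(j)}$ with $\alpha_{ij}\circ\widetilde\phi^i_{ij}=\phi^{\pi(i)}_{\pi(i)\pi(j)}\circ\rho^{\pi(i)}$ for all $i\ne j$. *)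

(* Defs.v *)
From Stdlib Require Import Classical FunctionalExtensionality.
Set Implicit Arguments.

Record group := Group {
  gcar :> Type;
  gmul : gcar -> gcar -> gcar;
  gone : gcar;
  ginv : gcar -> gcar;
  gmulA : forall x y z, gmul x (gmul y z) = gmul (gmul x y) z;
  gmul1 : forall x, gmul gone x = x;
  gmulV : forall x, gmul (ginv x) x = gone
}.
Arguments gmul {g}.
Arguments gone {g}.
Arguments ginv {g}.

Record hom (G H : group) := Hom {
  hfun :> G -> H;
  hmul : forall x y, hfun (gmul x y) = gmul (hfun x) (hfun y)
}.

Definition injective {A B : Type} (f : A -> B) := forall x y, f x = f y -> x = y.
Definition surjective {A B : Type} (f : A -> B) := forall y, exists x, f x = y.

Definition subgroup {G : group} (H : G -> Prop) : Prop :=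
  H gone /\ (forall x y, H x -> H y -> H (gmul x y)) /\ (forall x, H x -> H (ginv x)).

Definition gen {G : group} (S : G -> Prop) : G -> Prop :=
  fun x => forall H : G -> Prop, subgroup H -> (forall y, S y -> H y) -> H x.

Definition center {G : group} : G -> Prop :=
  fun x => forall y : G, gmul x y = gmul y x.

Definition ker {G H : group} (f : hom G H) : G -> Prop := fun x => f x = gone.

Definition edge (I : Type) :=
  { S : I -> Prop | exists i j, i <> j /\ forall k, S k <-> (k = i \/ k = j) }.

Definition inE {I : Type} (i : I) (e : edge I) : Prop := proj1_sig e i.

(** U-amalgams over I: a group G_e for each unordered pair e = {i,j}, and for
    each i in e a monomorphism phi^i_e : U -> G_e (phi is total in i; only its
    values for i in e are meaningful). *)
Record amalgam (I : Type) (U : group) := Amalgam {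
  agrp : edge I -> group;
  aphi : I -> forall e : edge I, hom U (agrp e);
  aphi_inj : forall (e : edge I) (i : I), inE i e -> injective (aphi i e)
}.

(** The condition tau_{ij} o phi^j_{ij} = tau_{kj} o phi^j_{kj} for pairwise
    distinct i,j,k is written as: for any two pairs e, f both containing j. *)
Definition enveloping (I : Type) (U : group) (A : amalgam I U) (G : group)
  (tau : forall e, hom (agrp A e) G) : Prop :=
  (forall x : G, gen (fun y => exists e z, y = tau e z) x) /\
  (forall (e f : edge I) (j : I), inE j e -> inE j f ->
     forall u : U, tau e (aphi A j e u) = tau f (aphi A j f u)).

Definition universal (I : Type) (U : group) (A : amalgam I U) (G : group)
  (tau : forall e, hom (agrp A e) G) : Prop :=
  enveloping A tau /\
  forall (H : group) (tau' : forall e, hom (agrp A e) H),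
    enveloping A tau' ->
    exists p : hom G H,
      surjective p /\ (forall e z, p (tau e z) = tau' e z) /\
      (forall q : hom G H, surjective q -> (forall e z, q (tau e z) = tau' e z) ->
         forall x, q x = p x).

Record perm (I : Type) := Perm {
  pfun :> I -> I;
  pinv : I -> I;
  pK : forall i, pinv (pfun i) = i;
  pKV : forall i, pfun (pinv i) = i
}.

Lemma mapE_proof (I : Type) (p : perm I) (e : edge I) :
  exists i j, i <> j /\ forall k, proj1_sig e (pinv p k) <-> (k = i \/ k = j).
Proof.
  destruct e as [S [i [j [Hij HS]]]]; simpl.
  exists (p i), (p j); split.
  - intro H. apply Hij. rewrite <- (pK p i), <- (pK p j), H. reflexivity.
  - intro k. rewrite HS. split.
    + intros [H|H]; [left|right]; rewrite <- H, pKV; reflexivity.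
    + intros [H|H]; [left|right]; rewrite H, pK; reflexivity.
Qed.

(** The image pi({i,j}) = {pi(i), pi(j)}. *)
Definition mapE (I : Type) (p : perm I) (e : edge I) : edge I :=
  exist _ (fun k => proj1_sig e (pinv p k)) (mapE_proof p e).

Definition amalgam_epi (I : Type) (Ut U : group) (At : amalgam I Ut) (A : amalgam I U)
  (pi : perm I) (rho : I -> hom Ut U)
  (alpha : forall e, hom (agrp At e) (agrp A (mapE pi e))) : Prop :=
  (forall i, surjective (rho i)) /\
  (forall e, surjective (alpha e)) /\
  (forall (e : edge I) (i : I), inE i e ->
     forall u : Ut, alpha e (aphi At i e u) = aphi A (pi i) (mapE pi e) (rho (pi i) u)).

Definition Zgrp (I : Type) (Ut : group) (At : amalgam I Ut) (V : Ut -> Prop) (e : edge I)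
  : agrp At e -> Prop :=
  gen (fun y => exists i v, inE i e /\ V v /\ y = aphi At i e v).

Definition Ngrp (I : Type) (Ut : group) (At : amalgam I Ut) (Gt : group)
  (taut : forall e, hom (agrp At e) Gt) (K : forall e, agrp At e -> Prop) : Gt -> Prop :=
  gen (fun y => exists e a, K e a /\ y = taut e a).

(* Main.v *)
Require Import Defs.
From Stdlib Require Import Classical FunctionalExtensionality PropExtensionality ClassicalEpsilon.

Arguments gmulA {g}.
Arguments gmul1 {g}.
Arguments gmulV {g}.
Arguments hmul {G H}.

Section G.
Context {G : group}.
Implicit Types x y z : G.

Lemma idem_one (e : G) : gmul e e = e -> e = gone.
Proof.
  intro H. rewrite <- (gmul1 e) at 1. rewrite <- (gmulV e) at 1.
  rewrite <- gmulA, H. apply gmulV.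
Qed.

Lemma mulV x : gmul x (ginv x) = gone.
Proof.
  apply idem_one. rewrite <- gmulA, (gmulA (ginv x) x), gmulV, gmul1. reflexivity.
Qed.

Lemma mulg1 x : gmul x gone = x.
Proof. rewrite <- (gmulV x), gmulA, mulV, gmul1. reflexivity. Qed.

Lemma mulK x y z : gmul x y = gmul x z -> y = z.
Proof.
  intro H. rewrite <- (gmul1 y), <- (gmul1 z), <- (gmulV x), <- !gmulA, H. reflexivity.
Qed.

Lemma invK x : ginv (ginv x) = x.
Proof. apply (mulK (ginv x)). rewrite mulV, gmulV. reflexivity. Qed.

Lemma invM x y : ginv (gmul x y) = gmul (ginv y) (ginv x).
Proof.
  apply (mulK (gmul x y)). rewrite mulV, <- gmulA, (gmulA y), mulV, gmul1, mulV.
  reflexivity.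
Qed.

Lemma mulKV x y : gmul (ginv x) (gmul x y) = y.
Proof. rewrite gmulA, gmulV, gmul1. reflexivity. Qed.

Lemma mulVK x y : gmul x (gmul (ginv x) y) = y.
Proof. rewrite gmulA, mulV, gmul1. reflexivity. Qed.

Lemma gen_sub (S : G -> Prop) : subgroup (gen S).
Proof.
  unfold subgroup. split; [|split].
  - intros H [H1 _] _. exact H1.
  - intros x y Hx Hy H HH HS. pose proof HH as [_ [HM _]]. apply HM; [apply Hx|apply Hy]; auto.
  - intros x Hx H HH HS. pose proof HH as [_ [_ HI]]. apply HI. apply Hx; auto.
Qed.

Lemma gen_ind (S H : G -> Prop) : subgroup H -> (forall y, S y -> H y) ->
  forall x, gen S x -> H x.
Proof. intros HH HS x Hx. apply Hx; auto. Qed.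

Lemma gen_in (S : G -> Prop) x : S x -> gen S x.
Proof. intros Hx H _ HS. auto. Qed.

Lemma center_sub : subgroup (@center G).
Proof.
  unfold subgroup. split; [|split].
  - intro y. rewrite gmul1, mulg1. reflexivity.
  - intros x y Hx Hy z. rewrite <- gmulA, Hy, gmulA, Hx, gmulA. reflexivity.
  - intros x Hx z. apply (mulK x). rewrite mulVK.
    rewrite gmulA, Hx, <- gmulA, mulV, mulg1. reflexivity.
Qed.

Lemma centr_sub (g : G) : subgroup (fun y => gmul g y = gmul y g).
Proof.
  unfold subgroup. split; [|split].
  - rewrite gmul1, mulg1. reflexivity.
  - intros x y Hx Hy. rewrite gmulA, Hx, <- gmulA, Hy, gmulA. reflexivity.
  - intros x Hx. apply (mulK x). rewrite (mulVK x g).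
    rewrite gmulA, <- Hx, <- gmulA, mulV, mulg1. reflexivity.
Qed.
End G.

Section H.
Variables (G H : group) (f : hom G H).
Lemma hom1 : f gone = gone.
Proof.
  apply (mulK (f gone)). rewrite <- hmul, gmul1, mulg1. reflexivity.
Qed.
Lemma homV x : f (ginv x) = ginv (f x).
Proof. apply (mulK (f x)). rewrite <- hmul, !mulV, hom1. reflexivity. Qed.

Lemma preim_sub (P : H -> Prop) : subgroup P -> subgroup (fun x => P (f x)).
Proof.
  intros [H1 [HM HI]]. unfold subgroup. split; [|split].
  - rewrite hom1. exact H1.
  - intros x y Hx Hy. rewrite hmul. auto.
  - intros x Hx. rewrite homV. auto.
Qed.
End H.

Lemma eq_sub (G H : group) (f g : hom G H) : subgroup (fun x => f x = g x).
Proof.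
  unfold subgroup. split; [|split].
  - rewrite !hom1. reflexivity.
  - intros x y Hx Hy. rewrite !hmul, Hx, Hy. reflexivity.
  - intros x Hx. rewrite !homV, Hx. reflexivity.
Qed.

Section Q.
Variables (X : group) (N : X -> Prop) (HN : subgroup N) (HC : forall x, N x -> center x).

Definition cos (g : X) : X -> Prop := fun h => N (gmul (ginv g) h).
Definition Qc := { P : X -> Prop | exists g, P = cos g }.
Definition mkQ (g : X) : Qc := exist _ (cos g) (ex_intro _ g eq_refl).
Definition rep (P : Qc) : X :=
  proj1_sig (constructive_indefinite_description _ (proj2_sig P)).
Lemma rep_spec P : proj1_sig P = cos (rep P).
Proof. unfold rep. destruct (constructive_indefinite_description _ _). simpl. auto. Qed.

Lemma Qc_eq (P Q : Qc) : proj1_sig P = proj1_sig Q -> P = Q.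
Proof.
  destruct P as [P HP], Q as [Q HQ]; simpl; intro E; subst.
  f_equal. apply proof_irrelevance.
Qed.

Lemma mkQ_rep P : mkQ (rep P) = P.
Proof. apply Qc_eq. simpl. rewrite rep_spec. reflexivity. Qed.

Lemma mkQ_eq g h : mkQ g = mkQ h <-> N (gmul (ginv g) h).
Proof.
  destruct HN as [H1 [HM HI]].
  split.
  - intro E. apply (f_equal (@proj1_sig _ _)) in E. simpl in E.
    change (cos g h). rewrite E. unfold cos. rewrite gmulV. exact H1.
  - intro Hn. apply Qc_eq. simpl. apply functional_extensionality. intro x.
    apply propositional_extensionality. unfold cos. split; intro Hx.
    + replace (gmul (ginv h) x) with (gmul (ginv (gmul (ginv g) h)) (gmul (ginv g) x)).
      * apply HM; auto.
      * rewrite invM, invK, <- gmulA, mulVK. reflexivity.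
    + replace (gmul (ginv g) x) with (gmul (gmul (ginv g) h) (gmul (ginv h) x)).
      * apply HM; auto.
      * rewrite <- gmulA, mulVK. reflexivity.
Qed.

Lemma mkQ_eq' g h : mkQ g = mkQ h <-> exists n, N n /\ h = gmul g n.
Proof.
  rewrite mkQ_eq. split.
  - intro Hn. exists (gmul (ginv g) h). split; auto. rewrite mulVK. reflexivity.
  - intros [n [Hn E]]. subst. rewrite mulKV. exact Hn.
Qed.

Lemma mkQ_mul a a' b b' : mkQ a = mkQ a' -> mkQ b = mkQ b' ->
  mkQ (gmul a b) = mkQ (gmul a' b').
Proof.
  rewrite !mkQ_eq'. intros [n [Hn E]] [m [Hm F]]. subst.
  exists (gmul n m). split. { apply HN; auto. }
  rewrite <- !gmulA. f_equal. rewrite !gmulA. f_equal. apply HC; auto.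
Qed.

Lemma mkQ_inv a a' : mkQ a = mkQ a' -> mkQ (ginv a) = mkQ (ginv a').
Proof.
  rewrite !mkQ_eq'. intros [n [Hn E]]. subst.
  exists (ginv n). split. { apply HN; auto. }
  rewrite invM. apply HC. apply HN. auto.
Qed.

Definition qmul (P Q : Qc) : Qc := mkQ (gmul (rep P) (rep Q)).
Definition qone : Qc := mkQ gone.
Definition qinv (P : Qc) : Qc := mkQ (ginv (rep P)).

Lemma rep_mkQ g : mkQ (rep (mkQ g)) = mkQ g.
Proof. apply mkQ_rep. Qed.

Lemma qmulA P Q R : qmul P (qmul Q R) = qmul (qmul P Q) R.
Proof.
  unfold qmul.
  transitivity (mkQ (gmul (rep P) (gmul (rep Q) (rep R)))).
  { apply mkQ_mul; [reflexivity| apply rep_mkQ]. }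
  rewrite gmulA. apply mkQ_mul; [symmetry; apply rep_mkQ | reflexivity].
Qed.

Lemma qmul1 P : qmul qone P = P.
Proof.
  unfold qmul, qone. rewrite <- (mkQ_rep P) at 2. rewrite <- (gmul1 (rep P)) at 2.
  apply mkQ_mul; [apply rep_mkQ | reflexivity].
Qed.

Lemma qmulV P : qmul (qinv P) P = qone.
Proof.
  unfold qmul, qinv, qone. rewrite <- (gmulV (rep P)).
  apply mkQ_mul; [apply rep_mkQ | reflexivity].
Qed.

Definition Qgrp : group := @Group Qc qmul qone qinv qmulA qmul1 qmulV.

Lemma q_hmul x y : (mkQ (gmul x y) : Qgrp) = gmul (mkQ x : Qgrp) (mkQ y).
Proof. simpl. unfold qmul. apply mkQ_mul; symmetry; apply rep_mkQ. Qed.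

Definition qhom : hom X Qgrp := @Hom X Qgrp mkQ q_hmul.
End Q.

Set Implicit Arguments.

Lemma edge_eq (I : Type) (e f : edge I) : proj1_sig e = proj1_sig f -> e = f.
Proof.
  destruct e as [e He], f as [f Hf]; simpl; intro E; subst. f_equal. apply proof_irrelevance.
Qed.

Definition edge2 (I : Type) (i k : I) (H : i <> k) : edge I :=
  exist _ (fun x => x = i \/ x = k) (ex_intro _ i (ex_intro _ k (conj H (fun x => iff_refl _)))).

Definition pinvp (I : Type) (p : perm I) : perm I := @Perm I (pinv p) (pfun p) (pKV p) (pK p).

Lemma mapE_pinv (I : Type) (p : perm I) e : mapE p (mapE (pinvp p) e) = e.
Proof.
  apply edge_eq. simpl. apply functional_extensionality. intro k. rewrite pKV. reflexivity.
Qed.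

Lemma mapE_pinv' (I : Type) (p : perm I) e : mapE (pinvp p) (mapE p e) = e.
Proof.
  apply edge_eq. simpl. apply functional_extensionality. intro k. rewrite pK. reflexivity.
Qed.

Definition castH (I : Type) (Ut U : group) (At : amalgam I Ut) (A : amalgam I U) (pi : perm I)
  (alpha : forall e, hom (agrp At e) (agrp A (mapE pi e))) e f (H : mapE pi e = f)
  : hom (agrp At e) (agrp A f) :=
  eq_rect _ (fun f' => hom (agrp At e) (agrp A f')) (alpha e) f H.

Lemma genI (G : group) (S : G -> Prop) x (Hx : gen S x) (H : G -> Prop) :
  subgroup H -> (forall y, S y -> H y) -> H x.
Proof. intros HH HS. apply Hx; auto. Qed.

Lemma inv1 (G : group) : ginv (@gone G) = gone.
Proof. rewrite <- (mulg1 (ginv gone)). apply gmulV. Qed.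

Lemma ker_sub (G H : group) (f : hom G H) : subgroup (ker f).
Proof.
  unfold subgroup, ker. split; [|split].
  - apply hom1.
  - intros x y Hx Hy. rewrite hmul, Hx, Hy. apply gmul1.
  - intros x Hx. rewrite homV, Hx. apply inv1.
Qed.

Lemma comp_sub (G H K : group) (f1 : hom G H) (f2 : hom H K) (g : hom G K) :
  subgroup (fun x => f2 (f1 x) = g x).
Proof.
  unfold subgroup. split; [|split].
  - rewrite !hom1. reflexivity.
  - intros x y Hx Hy. rewrite !hmul, Hx, Hy. reflexivity.
  - intros x Hx. rewrite !homV, Hx. reflexivity.
Qed.

Theorem mainTheorem1 (I : Type) (U Ut : group) (Vt : Ut -> Prop) (hVt : subgroup Vt)
  (At : amalgam I Ut)
  (hgenAt : forall (e : edge I) (x : agrp At e),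
      gen (fun y => exists i u, inE i e /\ y = aphi At i e u) x)
  (A : amalgam I U)
  (pi : perm I) (rho : I -> hom Ut U)
  (alpha : forall e, hom (agrp At e) (agrp A (mapE pi e)))
  (halpha : amalgam_epi At A pi rho alpha)
  (Gt : group) (taut : forall e, hom (agrp At e) Gt) (hGt : universal At taut)
  (G : group) (tau : forall e, hom (agrp A e) G) (hG : universal A tau)
  (ahat : hom Gt G)
  (hahat : forall e x, ahat (taut e x) = tau (mapE pi e) (alpha e x))
  (hAZ : forall e x, ker (alpha e) x -> Zgrp At Vt e x)
  (hZC : forall e x, Zgrp At Vt e x -> center x) :
  (forall x, Ngrp At taut (fun e => ker (alpha e)) x -> center x) /\
  (forall x, Ngrp At taut (fun e => ker (alpha e)) x <-> ker ahat x) /\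
  surjective ahat.
Proof.
  destruct hGt as [[HgenGt HenvGt] HuGt]. destruct hG as [[HgenG HenvG] HuG].
  destruct halpha as [Hrho [Hsurj Hcomp]].
  set (Nset := Ngrp At taut (fun e => ker (alpha e))).
  assert (C1 : forall e i v, inE i e -> Vt v -> center (taut e (aphi At i e v))).
  { intros e i v Hi Hv y.
    set (g0 := taut e (aphi At i e v)).
    apply (genI (HgenGt y) (H:=fun y => gmul g0 y = gmul y g0)); [apply centr_sub|].
    intros y' [f [z ->]].
    apply (genI (hgenAt f z) (H:=fun z => gmul g0 (taut f z) = gmul (taut f z) g0));
      [apply (preim_sub _ _ (taut f) (fun y => gmul g0 y = gmul y g0)); apply centr_sub|].
    intros w [k [u [Hk ->]]].
    destruct (classic (inE i f)) as [Hif|Hif].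
    - unfold g0. rewrite (HenvGt e f i Hi Hif v). rewrite <- !hmul. f_equal.
      apply (hZC f). apply gen_in. exists i, v. auto.
    - assert (Hki : i <> k) by (intro E; subst; contradiction).
      unfold g0. rewrite (HenvGt e (edge2 Hki) i Hi (or_introl eq_refl) v).
      rewrite (HenvGt f (edge2 Hki) k Hk (or_intror eq_refl) u).
      rewrite <- !hmul. f_equal.
      apply (hZC (edge2 Hki)). apply gen_in. exists i, v. split; [left; reflexivity | split; [exact Hv | reflexivity]]. }
  assert (C2 : forall e x, Zgrp At Vt e x -> center (taut e x)).
  { intros e x Hx.
    apply (genI Hx (H:=fun x => center (taut e x))); [apply (preim_sub _ _ (taut e) center); apply center_sub|].
    intros y [i [v [Hi [Hv ->]]]]. apply C1; auto. }
  assert (Ncent : forall x, Nset x -> center x).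
  { intros x Hx. apply (genI Hx (H:=center)); [apply center_sub|].
    intros y [e [a [Ha ->]]]. apply C2, hAZ, Ha. }
  assert (Nsub : subgroup Nset) by apply gen_sub.
  split; [exact Ncent|]. split.
  2:{ intro y.
    assert (Himg : subgroup (fun y => exists x, ahat x = y)).
    { unfold subgroup. split; [|split].
      - exists gone. apply hom1.
      - intros a b [x Hx] [x' Hx']. exists (gmul x x'). rewrite hmul, Hx, Hx'. reflexivity.
      - intros a [x Hx]. exists (ginv x). rewrite homV, Hx. reflexivity. }
    apply (genI (HgenG y) Himg).
    intros y' [f [z ->]].
    assert (L : forall e f (H : mapE pi e = f) z, exists x, ahat x = tau f z).
    { intros e f' H z'. subst f'. destruct (Hsurj e z') as [x Hx]. exists (taut e x).
      rewrite hahat, Hx. reflexivity. }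
    exact (L _ f (mapE_pinv pi f) z). }
  intro x. split.
  { intro Hx. apply (genI Hx (H:=ker ahat)); [apply ker_sub|].
    intros y [e [a [Ha ->]]]. unfold ker. rewrite hahat. unfold ker in Ha. rewrite Ha. apply hom1. }
  intro Hx.
  set (Q := Qgrp Gt Nset Nsub Ncent).
  set (q := qhom Gt Nset Nsub Ncent).
  assert (KEY : forall f e0 e (H : mapE pi e0 = f) (H' : mapE pi e = f) x' x,
             castH At A alpha H x' = castH At A alpha H' x -> q (taut e0 x') = q (taut e x)).
  { intros f e0 e H H' x' x0 Heq. destruct H'.
    assert (E : e0 = e).
    { pose proof (f_equal (mapE (pinvp pi)) H) as H2. rewrite !mapE_pinv' in H2. exact H2. }
    subst e0. rewrite (proof_irrelevance _ H eq_refl) in Heq. simpl in Heq.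
    simpl. apply (proj2 (mkQ_eq Gt Nset Nsub _ _)).
    rewrite <- homV, <- hmul. apply gen_in. exists e, (gmul (ginv x') x0). split; [|reflexivity].
    unfold ker. rewrite hmul, homV, Heq. apply gmulV. }
  assert (EXT : exists tau' : forall f, hom (agrp A f) Q,
             forall f e (H : mapE pi e = f) x, tau' f (castH At A alpha H x) = q (taut e x)).
  { assert (Sur : forall f y, exists x, castH At A alpha (mapE_pinv pi f) x = y).
    { intros f. generalize (mapE_pinv pi f). intro H. destruct H. apply Hsurj. }
    set (pre := fun f y => proj1_sig (constructive_indefinite_description _ (Sur f y))).
    assert (Hpre : forall f y, castH At A alpha (mapE_pinv pi f) (pre f y) = y).
    { intros f y. unfold pre. destruct (constructive_indefinite_description _ _). simpl. auto. }
    unshelve eexists (fun f => @Hom _ _ (fun y => q (taut _ (pre f y))) _).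
    - intros y z. cbv beta. rewrite <- hmul, <- hmul.
      apply (KEY f _ _ (mapE_pinv pi f) (mapE_pinv pi f)).
      rewrite !hmul, !Hpre. reflexivity.
    - intros f e H x0. simpl. apply (KEY f _ _ (mapE_pinv pi f) H). apply Hpre. }
  destruct EXT as [tau' Htau'].
  assert (Henv' : enveloping A tau').
  { split.
    - intro P. rewrite <- (mkQ_rep Gt Nset P).
      apply (genI (HgenGt (rep Gt Nset P)) (H:=fun g => gen (fun y => exists e z, y = tau' e z) (q g)));
        [apply (preim_sub _ _ q); apply gen_sub|].
      intros y [e [z ->]]. apply gen_in. exists (mapE pi e), (alpha e z).
      symmetry. exact (Htau' _ e eq_refl z).
    - intros f g j Hjf Hjg u.
      destruct (Hrho j u) as [ut Hut].
      set (j' := pinv pi j).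
      assert (Hin : forall f, inE j f -> inE j' (mapE (pinvp pi) f)).
      { intros f' Hf'. unfold inE, j'. simpl. rewrite pKV. exact Hf'. }
      assert (EPI : forall e f (H : mapE pi e = f) i, inE i e -> forall ut,
                 castH At A alpha H (aphi At i e ut) = aphi A (pi i) f (rho (pi i) ut)).
      { intros e f' H i Hi ut'. subst f'. apply Hcomp. exact Hi. }
      pose proof (EPI _ _ (mapE_pinv pi f) j' (Hin f Hjf) ut) as Ef.
      pose proof (EPI _ _ (mapE_pinv pi g) j' (Hin g Hjg) ut) as Eg.
      unfold j' in Ef, Eg. rewrite pKV, Hut in Ef, Eg.
      rewrite <- Ef, <- Eg, !Htau'. f_equal. apply HenvGt; apply Hin; auto. }
  destruct (HuG Q tau' Henv') as [p [_ [Hp _]]].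
  assert (PQ : forall x, p (ahat x) = q x).
  { intro x0. apply (genI (HgenGt x0) (comp_sub ahat p q)).
    intros y [e [z ->]]. rewrite hahat, Hp. exact (Htau' _ e eq_refl z). }
  assert (E : q x = q gone).
  { rewrite <- PQ. unfold ker in Hx. rewrite Hx, hom1. symmetry. apply (hom1 _ _ q). }
  apply (proj1 (mkQ_eq Gt Nset Nsub _ _)) in E.
  rewrite mulg1 in E. rewrite <- (invK x). apply Nsub. exact E.
Qed.
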